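(* Let $0<q<1$. Then \[ \sum_{n=0}^{\infty}\frac{(1/2|q^{2})_{n}^{2}}{[n]_{q^{2}}!\,[n+1]_{q^{2}}!}\,q^{2n}=\frac{(1+q)^{2}q^{1/4}}{\pi_{q}}. \]
   Context: Let $0<q<1$ and write $q^{x}=e^{x\log q}$. $[z]_{q^2}=\frac{1-q^{2z}}{1-q^2}$; $[0]_{q^2}!=1$, $[n]_{q^2}!=\prod_{k=1}^n[k]_{q^2}$; $(1/2|q^2)_n=\prod_{k=0}^{n-1}[1/2+k]_{q^2}$ (empty product $=1$). With $(z;q)_\infty=\prod_{k\ge0}(1-zq^k)$, $\pi_q=(1-q^2)q^{1/4}\frac{(q^2;q^2)_\infty^2}{(q;q^2)_\infty^2}$. *)

(* Defs.v *)
From Stdlib Require Import Reals.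
Open Scope R_scope.

Definition qpow (q x : R) : R := exp (x * ln q).

Definition qnum2 (q z : R) : R := (1 - qpow q (2 * z)) / (1 - q ^ 2).

Fixpoint qfact2 (q : R) (n : nat) : R :=
  match n with
  | O => 1
  | S m => qfact2 q m * qnum2 q (INR (S m))
  end.

(* (1/2 | q^2)_n = prod_{k=0}^{n-1} [1/2 + k]_{q^2} *)
Fixpoint qhalf2 (q : R) (n : nat) : R :=
  match n with
  | O => 1
  | S m => qhalf2 q m * qnum2 q (/2 + INR m)
  end.

Fixpoint qpoch_partial (z a : R) (N : nat) : R :=
  match N with
  | O => 1
  | S m => qpoch_partial z a m * (1 - z * a ^ m)
  end.

(* (z;a)_infty = P means the partial products converge to P *)
Definition qpoch_inf (z a P : R) : Prop := Un_cv (qpoch_partial z a) P.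

(* pi_q in terms of the values A = (q^2;q^2)_infty, B = (q;q^2)_infty *)
Definition pi_q (q A B : R) : R :=
  (1 - q ^ 2) * qpow q (/4) * (A ^ 2 / B ^ 2).

Definition term5 (q : R) (n : nat) : R :=
  (qhalf2 q n) ^ 2 / (qfact2 q n * qfact2 q (S n)) * q ^ (2 * n).

(* Main.v *)
Require Import Defs.
From Stdlib Require Import Reals Lra Lia.
Open Scope R_scope.

Lemma qpow_nat q n : 0 < q -> qpow q (INR n) = q ^ n.
Proof. intro h. unfold qpow. rewrite <- Rpower_pow by exact h. reflexivity. Qed.

Lemma qnum_nat q n : 0 < q -> qnum2 q (INR n) = (1 - q ^ (2 * n)) / (1 - q ^ 2).
Proof.
  intro h. unfold qnum2. f_equal. f_equal. rewrite <- qpow_nat by exact h.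
  f_equal. rewrite mult_INR. simpl. ring.
Qed.

Lemma qnum_half q m : 0 < q -> qnum2 q (/2 + INR m) = (1 - q * (q ^ 2) ^ m) / (1 - q ^ 2).
Proof.
  intro h. unfold qnum2. f_equal. f_equal.
  replace (q * (q ^ 2) ^ m) with (q ^ (S (2 * m))).
  2:{ rewrite <- pow_mult. simpl. ring. }
  rewrite <- qpow_nat by exact h. f_equal. rewrite S_INR, mult_INR. simpl. field.
Qed.

Lemma qfact2_eq q n : 0 < q -> q < 1 ->
  qfact2 q n * (1 - q ^ 2) ^ n = qpoch_partial (q ^ 2) (q ^ 2) n.
Proof.
  intros h h1. induction n as [|n IH]; cbn [qfact2 qpoch_partial].
  - simpl; ring.
  - rewrite <- IH. rewrite qnum_nat by exact h.
    replace (q ^ (2 * S n)) with (q ^ 2 * (q ^ 2) ^ n).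
    2:{ rewrite pow_mult. simpl. ring. }
    assert (1 - q ^ 2 <> 0) as H by nra.
    change ((1-q^2)^S n) with ((1-q^2)*(1-q^2)^n). field. exact H.
Qed.

Lemma qhalf2_eq q n : 0 < q -> q < 1 ->
  qhalf2 q n * (1 - q ^ 2) ^ n = qpoch_partial q (q ^ 2) n.
Proof.
  intros h h1. induction n as [|n IH]; cbn [qhalf2 qpoch_partial].
  - simpl; ring.
  - rewrite <- IH. rewrite qnum_half by exact h.
    assert (1 - q ^ 2 <> 0) as H by nra.
    change ((1-q^2)^S n) with ((1-q^2)*(1-q^2)^n). field. exact H.
Qed.

Lemma qnum_nat_pos q n : 0 < q -> q < 1 -> (0 < n)%nat -> 0 < qnum2 q (INR n).
Proof.
  intros h h1 hn. rewrite qnum_nat by exact h.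
  assert (0 <= q ^ (2 * n) < 1) by (apply pow_lt_1_compat; [lra|lia]).
  apply Rdiv_lt_0_compat; nra.
Qed.

Lemma qfact2_pos q n : 0 < q -> q < 1 -> 0 < qfact2 q n.
Proof.
  intros h h1. induction n as [|n IH]; cbn [qfact2]. lra.
  apply Rmult_lt_0_compat. exact IH. apply qnum_nat_pos; auto; lia.
Qed.

Lemma qhalf2_pos q n : 0 < q -> q < 1 -> 0 < qhalf2 q n.
Proof.
  intros h h1. induction n as [|n IH]; cbn [qhalf2]. lra.
  apply Rmult_lt_0_compat. exact IH. rewrite qnum_half by exact h.
  assert (0 <= (q^2)^n <= 1).
  { split. apply pow_le; nra. rewrite <- (pow1 n). apply pow_incr; nra. }
  apply Rdiv_lt_0_compat; nra.
Qed.

Lemma psum q N : 0 < q -> q < 1 ->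
  sum_f_R0 (term5 q) N = (1+q)^2 * qhalf2 q (S N) ^ 2 / (qfact2 q N * qfact2 q (S N)).
Proof.
  intros h h1.
  assert (1 - q ^ 2 <> 0) as H by nra.
  assert (H1 : 1 - q <> 0) by lra.
  assert (H2 : 1 + q <> 0) by lra.
  induction N as [|N IH].
  - simpl sum_f_R0. unfold term5. cbn [qhalf2 qfact2].
    rewrite qnum_half, qnum_nat by exact h. simpl. field. nra.
  - cbn [sum_f_R0]. rewrite IH. unfold term5.
    pose proof (qfact2_pos q N h h1) as Hf.
    pose proof (qhalf2_pos q N h h1) as Hh.
    cbn [qhalf2 qfact2].
    rewrite !qnum_half, !qnum_nat by exact h.
    rewrite !pow_mult.
    set (v := (q ^ 2) ^ N).
    assert (0 <= v <= 1).
    { split. apply pow_le; nra. unfold v; rewrite <- (pow1 N). apply pow_incr; nra. }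
    change ((q^2)^S (S N)) with (q^2*(q^2*v)).
    change ((q^2)^S N) with (q^2*v).
    assert (q^2 < 1) by nra.
    assert (1 - q^2*v <> 0) by nra.
    assert (1 - q^2*(q^2*v) <> 0) by nra.
    field. repeat split; try lra; nra.
Qed.

Lemma exp_mono x y : x <= y -> exp x <= exp y.
Proof. intro H. destruct (Rle_lt_or_eq_dec x y H) as [H'|H'].
  left; apply exp_increasing, H'. subst; lra. Qed.

Lemma exp_bound x z : 0 <= x <= z -> z < 1 -> exp (- (x / (1 - z))) <= 1 - x.
Proof.
  intros [hx hxz] hz.
  apply Rle_trans with (exp (- (x / (1 - x)))).
  - apply exp_mono. apply Ropp_le_contravar.
    unfold Rdiv. apply Rmult_le_compat_l. exact hx.
    apply Rinv_le_contravar; lra.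
  - rewrite exp_Ropp. pose proof (exp_ineq1_le (x / (1 - x))).
    replace (1 - x) with (/ (1 + x / (1 - x))) at 2 by (field; lra).
    apply Rinv_le_contravar. 2: exact H.
    assert (0 <= x / (1 - x)) by (unfold Rdiv; apply Rmult_le_pos; [lra|left; apply Rinv_0_lt_compat; lra]). lra.
Qed.

Lemma prod_lb z a N : 0 <= z < 1 -> 0 < a < 1 ->
  exp (- (z / ((1 - z) * (1 - a)) * (1 - a ^ N))) <= qpoch_partial z a N.
Proof.
  intros hz ha. induction N as [|N IH]; cbn [qpoch_partial].
  - simpl. replace (- (z / ((1 - z) * (1 - a)) * (1 - 1))) with 0 by ring.
    rewrite exp_0; lra.
  - assert (0 <= a ^ N <= 1).
    { split. apply pow_le; lra. rewrite <- (pow1 N). apply pow_incr; lra. }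
    assert (hb := exp_bound (z * a ^ N) z ltac:(split; nra) (proj2 hz)).
    replace (- (z / ((1 - z) * (1 - a)) * (1 - a ^ S N))) with
      (- (z / ((1 - z) * (1 - a)) * (1 - a ^ N)) + - (z * a ^ N / (1 - z))).
    2:{ simpl. field. split; lra. }
    rewrite exp_plus. apply Rmult_le_compat; try (left; apply exp_pos); assumption.
Qed.

Lemma lim_pos z a P : 0 <= z < 1 -> 0 < a < 1 -> qpoch_inf z a P -> 0 < P.
Proof.
  intros hz ha hP.
  set (K := z / ((1 - z) * (1 - a))).
  assert (0 <= K) by (unfold K, Rdiv; apply Rmult_le_pos; [lra|left; apply Rinv_0_lt_compat; nra]).
  apply Rlt_le_trans with (exp (- K)). apply exp_pos.
  apply (Rle_cv_lim (Un := fun _ => exp (- K)) (Vn := qpoch_partial z a)).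
  - intro n. apply Rle_trans with (2 := prod_lb z a n hz ha). apply exp_mono.
    fold K. assert (0 <= a ^ n) by (apply pow_le; lra). nra.
  - intros e he. exists 0%nat. intros. unfold Rdist. rewrite Rminus_diag, Rabs_R0. lra.
  - exact hP.
Qed.

Lemma cv_S f l : Un_cv f l -> Un_cv (fun n => f (S n)) l.
Proof. intros H e he. destruct (H e he) as [N HN]. exists N. intros n hn. apply HN. lia. Qed.

Lemma cv_ext f g l : (forall n, f n = g n) -> Un_cv f l -> Un_cv g l.
Proof. intros E H e he. destruct (H e he) as [N HN]. exists N. intros n hn. rewrite <- E. apply HN; lia. Qed.

Lemma cv_const c : Un_cv (fun _ => c) c.
Proof. intros e he. exists 0%nat. intros. unfold Rdist. rewrite Rminus_diag, Rabs_R0. lra. Qed.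

Lemma cv_inv f l : l <> 0 -> Un_cv f l -> Un_cv (fun n => / f n) (/ l).
Proof.
  intros hl H. apply (continuity_seq (/ id)%F f l).
  - apply continuity_pt_inv. apply derivable_continuous_pt, derivable_pt_id. exact hl.
  - exact H.
Qed.

Theorem mainTheorem5 (q A B : R) (hq0 : 0 < q) (hq1 : q < 1)
  (hA : qpoch_inf (q ^ 2) (q ^ 2) A) (hB : qpoch_inf q (q ^ 2) B) :
  infinite_sum (term5 q) ((1 + q) ^ 2 * qpow q (/4) / pi_q q A B).
Proof.
  assert (hq2 : 0 < q ^ 2 < 1) by (split; nra).
  assert (Apos : 0 < A) by (apply (lim_pos (q^2) (q^2)); [lra|lra|exact hA]).
  assert (Bpos : 0 < B) by (apply (lim_pos q (q^2)); [lra|lra|exact hB]).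
  assert (H : 1 - q ^ 2 <> 0) by nra.
  set (Ap := qpoch_partial (q^2) (q^2)) in *.
  set (Bp := qpoch_partial q (q^2)) in *.
  assert (Hcv : Un_cv (fun N => ((1+q)^2/(1-q^2) * (Bp (S N) * Bp (S N))) * / (Ap N * Ap (S N)))
     (((1+q)^2/(1-q^2) * (B * B)) * / (A * A))).
  { apply CV_mult. apply CV_mult. apply cv_const. apply CV_mult; apply cv_S; exact hB.
    apply cv_inv. nra. apply CV_mult. exact hA. apply cv_S; exact hA. }
  replace ((1 + q) ^ 2 * qpow q (/4) / pi_q q A B) with
     (((1+q)^2/(1-q^2) * (B * B)) * / (A * A)).
  2:{ unfold pi_q. assert (0 < qpow q (/4)) by apply exp_pos. field. nra. }
  cut (Un_cv (sum_f_R0 (term5 q)) (((1+q)^2/(1-q^2) * (B * B)) * / (A * A))).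
  { intros Hs e he. exact (Hs e he). }
  refine (cv_ext _ _ _ _ Hcv).
  intro n. rewrite psum by assumption. symmetry.
  unfold Ap, Bp. rewrite <- !qfact2_eq, <- !qhalf2_eq by assumption.
  pose proof (qfact2_pos q n hq0 hq1). pose proof (qfact2_pos q (S n) hq0 hq1).
  pose proof (qhalf2_pos q (S n) hq0 hq1).
  assert (0 < (1 - q^2) ^ n) by (apply pow_lt; nra).
  change ((1-q^2)^S n) with ((1-q^2)*(1-q^2)^n).
  field. repeat split; try lra; nra.
Qed.
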